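(* Let $\mathcal O$ be the $G_0$-orbit of a point $z_0\in\mathfrak g^*\setminus\mathrm{Sing}\,\mathfrak g^*$. Let $U\subset\mathfrak g^*\setminus\mathrm{Sing}\,\mathfrak g^*$ be an open neighbourhood of $z_0$, and let $g_1,\dots,g_r$, with $r=\operatorname{rank}\mathfrak g$, be holomorphic functions on $U$ with $c(g_m)=0$ whose differentials are linearly independent at every point of $U$. Then, at every point of $\mathcal O\cap U$, $T^{1,0}\mathcal O$ is spanned by the vector fields $c(\tilde g_1),\dots,c(\tilde g_r)$, where $\tilde g_m(z)=\sum_i\overline{\frac{\partial g_m}{\partial z_i}(z)}\,z_i$.
   Context: Setting. $\mathfrak g_0$ is a finite-dimensional nonabelian real Lie algebra and $\mathfrak g=\mathfrak g_0^{\mathbb C}$, with $n=\dim_{\mathbb C}\mathfrak g$. Fix a basis of $\mathfrak g_0$ with real structure constants $c_{ij}^k$; $z_k$ are the complex linear coordinates on $\mathfrak g^*$. $G_0$ is the connected real Lie group with Lie algebra $\mathfrak g_0$, acting by the coadjoint action. Bivector and Hamiltonian fields. $c=c_{ij}^kz_k\partial_{z_i}\wedge\partial_{z_j}$, and for a smooth complex function $f$, $c(f)=c_{ij}^kz_k\frac{\partial f}{\partial z_i}\partial_{z_j}$. Singular set and rank. $\mathrm{Sing}\,\mathfrak g^*$ is the set where $(c_{ij}^kz_k)$ has non-maximal rank, and $\operatorname{rank}\mathfrak g=n-\max_z\operatorname{rank}(c_{ij}^kz_k)$. $T^{1,0}\mathcal O=T^{\mathbb C}\mathcal O\cap T^{1,0}\mathfrak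 g^*$. *)

(* Defs.v *)
From mathcomp Require Import all_boot all_order all_algebra.
From mathcomp Require Import reals.
From mathcomp Require Import complex.
Set Implicit Arguments. Unset Strict Implicit. Unset Printing Implicit Defensive.
Import GRing.Theory Num.Theory ComplexField.
Local Open Scope ring_scope.
Local Open Scope complex_scope.

(* Structure constants cst i j k = c_{ij}^k of a real Lie algebra g_0 of dimension n:
   [e_i, e_j] = \sum_k c_{ij}^k e_k.  Points of g^* = C^n are row vectors 'rV[R[i]]_n. *)

Definition is_lie_structure (R : realType) (n : nat) (cst : 'I_n -> 'I_n -> 'I_n -> R) : Prop :=
  (forall i j k, cst i j k = - cst j i k) /\
  (forall i j l m, \sum_(k < n) (cst i j k * cst k l m + cst j l k * cst k i m
                                + cst l i k * cst k j m) = 0).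

Definition nonabelian (R : realType) (n : nat) (cst : 'I_n -> 'I_n -> 'I_n -> R) : Prop :=
  exists i j k, cst i j k != 0.

Definition poisson_mx (R : realType) (n : nat) (cst : 'I_n -> 'I_n -> 'I_n -> R)
  (z : 'rV[R[i]]_n) : 'M[R[i]]_n :=
  \matrix_(i, j) \sum_(k < n) (cst i j k)%:C * z 0 k.

Definition is_max_rank (R : realType) (n : nat) (cst : 'I_n -> 'I_n -> 'I_n -> R) (m : nat) : Prop :=
  (exists w, \rank (poisson_mx cst w) = m) /\ (forall w, (\rank (poisson_mx cst w) <= m)%N).

(* z is not in Sing g^* (given that m is the maximal rank). *)
Definition regular_pt (R : realType) (n : nat) (cst : 'I_n -> 'I_n -> 'I_n -> R) (m : nat)
  (z : 'rV[R[i]]_n) : Prop := \rank (poisson_mx cst z) = m.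

(* c(f)(z) = c_{ij}^k z_k (df/dz_i) d/dz_j, where v_i = df/dz_i(z). *)
Definition hamvec (R : realType) (n : nat) (cst : 'I_n -> 'I_n -> 'I_n -> R)
  (z v : 'rV[R[i]]_n) : 'rV[R[i]]_n :=
  \row_j \sum_(i < n) \sum_(k < n) (cst i j k)%:C * z 0 k * v 0 i.

Definition cnorm (R : realType) (n : nat) (h : 'rV[R[i]]_n) : R[i] :=
  \sum_(j < n) `|h 0 j|.

Definition open_set (R : realType) (n : nat) (U : 'rV[R[i]]_n -> Prop) : Prop :=
  forall z, U z -> exists d : R, 0 < d /\
    forall w, cnorm (w - z) < d%:C -> U w.

Definition cdiff (R : realType) (n : nat) (f : 'rV[R[i]]_n -> R[i]) (z d : 'rV[R[i]]_n) : Prop :=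
  forall e : R, 0 < e -> exists del : R, 0 < del /\
    forall h, cnorm h < del%:C ->
      `|f (z + h) - f z - \sum_(j < n) d 0 j * h 0 j| <= e%:C * cnorm h.

Definition holo_on (R : realType) (n : nat) (U : 'rV[R[i]]_n -> Prop)
  (f : 'rV[R[i]]_n -> R[i]) (df : 'rV[R[i]]_n -> 'rV[R[i]]_n) : Prop :=
  forall z, U z -> cdiff f z (df z).

Definition lin_indep (R : realType) (n r : nat) (v : 'I_r -> 'rV[R[i]]_n) : Prop :=
  forall a : 'I_r -> R[i], \sum_(m < r) a m *: v m = 0 -> forall m, a m = 0.

Definition cspan (R : realType) (n r : nat) (v : 'I_r -> 'rV[R[i]]_n) (w : 'rV[R[i]]_n) : Prop :=
  exists a : 'I_r -> R[i], w = \sum_(m < r) a m *: v m.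

(* Infinitesimal coadjoint action of X in g_0 (real coordinates) on z in g^*:
   (ad^*_X z)(e_j) = - z([X, e_j]). *)
Definition coad (R : realType) (n : nat) (cst : 'I_n -> 'I_n -> 'I_n -> R)
  (X : 'rV[R]_n) (z : 'rV[R[i]]_n) : 'rV[R[i]]_n :=
  \row_j - \sum_(i < n) \sum_(k < n) (X 0 i * cst i j k)%:C * z 0 k.

Definition curve_deriv (R : realType) (n : nat) (gam : R -> 'rV[R[i]]_n) (t : R)
  (v : 'rV[R[i]]_n) : Prop :=
  forall e : R, 0 < e -> exists del : R, 0 < del /\
    forall h : R, `|h| < del ->
      cnorm (gam (t + h) - gam t - h%:C *: v) <= (e * `|h|)%:C.

(* w' = exp(ad^*_X) w : time-1 flow of the linear vector field z |-> ad^*_X z. *)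
Definition flow1 (R : realType) (n : nat) (cst : 'I_n -> 'I_n -> 'I_n -> R)
  (X : 'rV[R]_n) (w w' : 'rV[R[i]]_n) : Prop :=
  exists gam : R -> 'rV[R[i]]_n, gam 0 = w /\ gam 1 = w' /\
    forall t, curve_deriv gam t (coad cst X (gam t)).

(* The G_0-orbit of z0: G_0 connected is generated by exp(g_0), and
   Ad^*(exp X) = exp(ad^*_X); so the orbit is the set of points reached from z0
   by finitely many such flows. *)
Inductive coad_orbit (R : realType) (n : nat) (cst : 'I_n -> 'I_n -> 'I_n -> R)
  (z0 : 'rV[R[i]]_n) : 'rV[R[i]]_n -> Prop :=
| orbit_refl : coad_orbit cst z0 z0
| orbit_step : forall w w' X, coad_orbit cst z0 w -> flow1 cst X w w' -> coad_orbit cst z0 w'.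

(* Complexified tangent space T^C_z O inside T^C_z(C^n) = span(d/dz_j) (+) span(d/dzbar_j):
   a real tangent vector with complex coordinate displacement u is
   sum_j u_j d/dz_j + conj(u_j) d/dzbar_j, and T_z O = { ad^*_X z | X in g_0 }.
   (v, w) are the (d/dz, d/dzbar) components. *)
Definition TC_orbit (R : realType) (n : nat) (cst : 'I_n -> 'I_n -> 'I_n -> R)
  (z v w : 'rV[R[i]]_n) : Prop :=
  exists (p : nat) (a : 'I_p -> R[i]) (X : 'I_p -> 'rV[R]_n),
    v = \sum_(k < p) a k *: coad cst (X k) z /\
    w = \sum_(k < p) a k *: map_mx conjc (coad cst (X k) z).

(* T^{1,0}_z O = T^C_z O  intersected with T^{1,0}_z(C^n): vectors with no d/dzbar part. *)
Definition T10_orbit (R : realType) (n : nat) (cst : 'I_n -> 'I_n -> 'I_n -> R)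
  (z v : 'rV[R[i]]_n) : Prop := TC_orbit cst z v 0.

(* c(g~)(z) where g~(z) = sum_i conj(dg/dz_i(z)) z_i: since conj(dg/dz_i) is
   antiholomorphic, d g~/dz_i (z) = conj(dg/dz_i(z)). *)
Definition ham_tilde (R : realType) (n : nat) (cst : 'I_n -> 'I_n -> 'I_n -> R)
  (z dgz : 'rV[R[i]]_n) : 'rV[R[i]]_n :=
  hamvec cst z (map_mx conjc dgz).

(* Main.v *)
Require Import Defs.
From mathcomp Require Import all_boot all_order all_algebra.
From mathcomp Require Import reals.
From mathcomp Require Import complex.
Import GRing.Theory Num.Theory ComplexField.
Local Open Scope ring_scope.
Local Open Scope complex_scope.

Lemma hamvecE (R : realType) (n : nat) (cst : 'I_n -> 'I_n -> 'I_n -> R) z v :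
  hamvec cst z v = v *m poisson_mx cst z.
Proof.
apply/rowP => j; rewrite !mxE; apply: eq_bigr => i _.
rewrite !mxE mulr_sumr; apply: eq_bigr => k _; by rewrite mulrC.
Qed.

Lemma coadE (R : realType) (n : nat) (cst : 'I_n -> 'I_n -> 'I_n -> R) X z :
  coad cst X z = - (map_mx (real_complex R) X *m poisson_mx cst z).
Proof.
apply/rowP => j; rewrite !mxE; congr (- _); apply: eq_bigr => i _.
rewrite !mxE mulr_sumr; apply: eq_bigr => k _.
by rewrite (rmorphM (real_complex R)) mulrA.
Qed.

Lemma map_real_conj (R : realType) (n : nat) (X : 'rV[R]_n) :
  map_mx conjc (map_mx (real_complex R) X) = map_mx (real_complex R) X.
Proof. by apply/rowP => j; rewrite !mxE conjc_real. Qed.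

Lemma coad_conjE (R : realType) (n : nat) (cst : 'I_n -> 'I_n -> 'I_n -> R) X z :
  map_mx conjc (coad cst X z) =
  - (map_mx (real_complex R) X *m map_mx conjc (poisson_mx cst z)).
Proof. by rewrite coadE map_mxN map_mxM map_real_conj. Qed.

Lemma sum_lin (R : realType) (n p : nat) (a : 'I_p -> R[i]) (X : 'I_p -> 'rV[R]_n)
  (Q : 'M[R[i]]_n) :
  \sum_(k < p) a k *: - (map_mx (real_complex R) (X k) *m Q) =
  (- \sum_(k < p) a k *: map_mx (real_complex R) (X k)) *m Q.
Proof.
rewrite mulNmx mulmx_suml -sumrN; apply: eq_bigr => k _.
by rewrite scalerN scalemxAl.
Qed.

Lemma dir2 (R : realType) (n : nat) (cst : 'I_n -> 'I_n -> 'I_n -> R) (z Y v : 'rV[R[i]]_n) :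
  v = Y *m poisson_mx cst z -> Y *m map_mx conjc (poisson_mx cst z) = 0 ->
  T10_orbit cst z v.
Proof.
move=> HvY HwY.
exists n, (fun k => - Y 0 k), (fun k => delta_mx 0 k).
have E : - \sum_(k < n) - Y 0 k *: map_mx (real_complex R) (delta_mx 0 k : 'rV[R]_n) = Y.
  rewrite -sumrN [RHS](row_sum_delta Y); apply: eq_bigr => k _.
  by rewrite map_delta_mx scaleNr opprK.
have key (Q : 'M[R[i]]_n) : \sum_(k < n) - Y 0 k *: - (map_mx (real_complex R) (delta_mx 0 k : 'rV[R]_n) *m Q) = Y *m Q.
  by rewrite sum_lin; congr (_ *m _).
split.
+ rewrite HvY -key; apply: eq_bigr => k _; by rewrite coadE.
+ transitivity (Y *m map_mx conjc (poisson_mx cst z)); first by rewrite HwY.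
  rewrite -key; apply: eq_bigr => k _; by rewrite coad_conjE.
Qed.

Lemma dir1 (R : realType) (n : nat) (cst : 'I_n -> 'I_n -> 'I_n -> R) (z v : 'rV[R[i]]_n) :
  T10_orbit cst z v -> exists Y, v = Y *m poisson_mx cst z /\ Y *m map_mx conjc (poisson_mx cst z) = 0.
Proof.
move=> [p [a [X [Hv Hw]]]].
exists (- \sum_(k < p) a k *: map_mx (real_complex R) (X k)); split.
  by rewrite Hv -sum_lin; apply: eq_bigr => k _; rewrite coadE.
by rewrite -sum_lin [RHS]Hw; apply: eq_bigr => k _; rewrite coad_conjE.
Qed.

Lemma freeD_lem (R : realType) (n r : nat) (dv : 'I_r -> 'rV[R[i]]_n) :
  lin_indep dv -> row_free (\matrix_(m < r, j < n) conjc (dv m 0 j)).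
Proof.
move=> Hind.
set D := \matrix_(m < r, j < n) conjc (dv m 0 j).
rewrite -kermx_eq0; apply/eqP/row_matrixP => i; rewrite row0.
set u := row i (kermx D).
have uD : u *m D = 0 by rewrite /u -row_mul mulmx_ker row0.
clearbody u.
have Hu : forall m, u 0 m = 0.
  have := Hind (fun m => conjc (u 0 m)).
  have -> : \sum_(m < r) conjc (u 0 m) *: dv m = map_mx conjc (u *m D).
    rewrite map_mxM mulmx_sum_row; apply: eq_bigr => m _.
    congr (_ *: _); first by rewrite mxE.
    by apply/rowP => j; rewrite !mxE; exact: esym (conjcK _).
  rewrite uD map_mx0 => H m; have := H erefl m.
  by move/eqP; rewrite conjc_eq0 => /eqP.
by apply/rowP => m; rewrite Hu mxE.
Qed.

Lemma LA (R : realType) (n mr : nat) (P : 'M[R[i]]_n) (dv : 'I_(n - mr) -> 'rV[R[i]]_n) :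
  \rank P = mr -> (forall m, dv m *m P = 0) -> lin_indep dv ->
  forall Y : 'rV[R[i]]_n, Y *m map_mx conjc P = 0 ->
  exists b : 'rV[R[i]]_(n - mr), Y = b *m \matrix_(m < n - mr, j < n) conjc (dv m 0 j).
Proof.
move=> rkP Hcas Hind Y HY.
set Pb := map_mx conjc P.
set D := \matrix_(m < n - mr, j < n) conjc (dv m 0 j).
have rowD m : row m D = map_mx conjc (dv m).
  by apply/rowP => j; rewrite !mxE.
have DPb : D *m Pb = 0.
  apply/row_matrixP => m; rewrite row_mul rowD row0 /Pb -map_mxM.
  by rewrite Hcas map_mx0.
have rkPb : \rank Pb = mr by rewrite /Pb mxrank_map.
have freeD : row_free D by apply: freeD_lem.
have rkD : \rank D = (n - mr)%N.
  by apply/eqP; rewrite eqn_leq rank_leq_row row_leq_rank freeD.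
have DK : (D <= kermx Pb)%MS by apply/sub_kermxP.
have KD : (kermx Pb <= D)%MS.
  have := (mxrank_leqif_sup DK).2.
  by rewrite mxrank_ker rkPb rkD eqxx => <-.
have YK : (Y <= kermx Pb)%MS by apply/sub_kermxP.
by apply/submxP; apply: submx_trans YK KD.
Qed.

Theorem mainTheorem17 (R : realType) (n : nat) (cst : 'I_n -> 'I_n -> 'I_n -> R)
  (Hlie : is_lie_structure cst) (Hnab : nonabelian cst)
  (mr : nat) (Hmr : is_max_rank cst mr)
  (z0 : 'rV[R[i]]_n) (Hz0 : regular_pt cst mr z0)
  (U : 'rV[R[i]]_n -> Prop) (HUopen : open_set U) (HUreg : forall z, U z -> regular_pt cst mr z)
  (Hz0U : U z0)
  (g : 'I_(n - mr) -> 'rV[R[i]]_n -> R[i]) (dg : 'I_(n - mr) -> 'rV[R[i]]_n -> 'rV[R[i]]_n)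
  (Hhol : forall m, holo_on U (g m) (dg m))
  (Hcas : forall m z, U z -> hamvec cst z (dg m z) = 0)
  (Hind : forall z, U z -> lin_indep (fun m => dg m z)) :
  forall z, coad_orbit cst z0 z -> U z ->
    forall v, T10_orbit cst z v <-> cspan (fun m => ham_tilde cst z (dg m z)) v.
Proof.
move=> z _ Uz v.
set P := poisson_mx cst z.
set D := \matrix_(m < n - mr, j < n) conjc (dg m z 0 j).
have rowD m : row m D = map_mx conjc (dg m z).
  by apply/rowP => j; rewrite !mxE.
have Hc m : dg m z *m P = 0 by rewrite -hamvecE Hcas.
have hamE m : ham_tilde cst z (dg m z) = row m D *m P by rewrite /ham_tilde hamvecE rowD.
split.
- move/dir1 => [Y [HvY HwY]].
  have [b Hb] := @LA _ _ _ P _ (HUreg z Uz) Hc (Hind z Uz) _ HwY.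
  exists (fun m => b 0 m).
  rewrite HvY Hb -mulmxA mulmx_sum_row; apply: eq_bigr => m _.
  by rewrite hamE row_mul.
- move=> [b Hb].
  apply: (@dir2 _ _ _ _ (\sum_(m < n - mr) b m *: row m D)).
    rewrite Hb mulmx_suml; apply: eq_bigr => m _.
    by rewrite hamE scalemxAl.
  rewrite mulmx_suml big1 // => m _.
  rewrite -scalemxAl rowD -map_mxM Hc map_mx0 scaler0 //.
Qed.
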